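(* Let $p\in\mathrm{CycPF}_n$ be a cyclic parking function with classical outcome $\mathrm{Inc}_i^n$ (so car $i$ ends up in spot $1$). Then $i=\min\Psi(p)$, the smallest element of the permutation component $\Psi(p)$.
   Context: Classical parking process on $n$ spots for $p\in[n]^n$: cars $1,\dots,n$ enter in order; car $i$ parks in the first unoccupied spot $k\ge p_i$, failing if none. If all park, the outcome $\pi$ has $\pi_k$ = car in spot $k$, and the displacement vector is $\mathrm{disp}(p)=(d_1,\dots,d_n)$, $d_i=\pi^{-1}_i-p_i$. $\mathrm{Inc}_i^n:=i(i+1)\cdots n\,12\cdots(i-1)$; $\mathrm{CycPF}_n$ is the set of parking preferences for which all cars park and the outcome is $\mathrm{Inc}_i^n$ for some $i$. For a permutation $\sigma=\sigma_1\cdots\sigma_n$, an inversion is a pair $(a,b)$ with $a>b$ and $a$ appearing before $b$; $\mathrm{inv}_a(\sigma)$ is the number of $b<a$ with $(a,b)$ an inversion, and $\mathrm{InvSeq}(\sigma)=(\mathrm{inv}_1(\sigma),\dots,\mathrm{inv}_n(\sigma))$; $\mathrm{InvSeq}$ is a bijection from $S_n$ onto the sequences $(a_1,\dots,a_n)$ with $0\le a_k<k$. A component of $\sigma$ is a contiguous block $\sigma_a\cdots\sigma_b$ with $\{\sigma_a,\dots,\sigma_b\}=\{a,\dots,b\}$ that is minimal for inclusion; every permutation decomposes uniquely into components. $\Psi(p)$ is defined as the component containing $i$ of the unique permutation $\sigma$ with $\mathrm{InvSeq}(\sigma)=\mathrm{disp}(p)$, where $\mathrm{Inc}_i^n$ is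 the outcome of $p$. *)

(* Defs.v *)
(* Everything is 1-indexed: spots, cars and permutation
   values live in {1,...,n}; sequences are stored as seq nat. *)
From mathcomp Require Import all_boot.
Set Implicit Arguments. Unset Strict Implicit. Unset Printing Implicit Defensive.

Definition is_pref (n : nat) (p : seq nat) : bool :=
  (size p == n) && all (fun a => (1 <= a) && (a <= n)) p.

(* Classical parking process.  [park_aux n occ p] lets the cars of p enter
   in order, [occ] being the already occupied spots; it returns
   [Some s] where s_j is the spot of the j-th car, or [None] if a car fails. *)
Fixpoint park_aux (n : nat) (occ : seq nat) (p : seq nat) : option (seq nat) :=
  match p with
  | [::] => Some [::]
  | a :: p' =>
      match [seq k <- iota a (n.+1 - a) | k \notin occ] with
      | [::] => None
      | k :: _ => omap (cons k) (park_aux n (k :: occ) p')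
      end
  end.

(* spots p = Some (pi^{-1}_1, ..., pi^{-1}_n) when all cars park *)
Definition spots (n : nat) (p : seq nat) : option (seq nat) := park_aux n [::] p.

(* outcome pi from the spot list s: pi_k = car parked in spot k *)
Definition outcome_of (n : nat) (s : seq nat) : seq nat :=
  [seq (index k s).+1 | k <- iota 1 n].

Definition Inc (n i : nat) : seq nat := iota i (n.+1 - i) ++ iota 1 (i.-1).

Definition disp_of (s p : seq nat) : seq nat := [seq x.1 - x.2 | x <- zip s p].

Definition is_perm (n : nat) (sigma : seq nat) : bool := perm_eq sigma (iota 1 n).

Definition inv_at (sigma : seq nat) (a : nat) : nat :=
  count (fun b => index a sigma < index b sigma) (iota 1 a.-1).

Definition InvSeq (n : nat) (sigma : seq nat) : seq nat :=
  [seq inv_at sigma a | a <- iota 1 n].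

Definition split_at (sigma : seq nat) (k : nat) : bool :=
  perm_eq (take k sigma) (iota 1 k).

(* [a,b] (positions) is a component of sigma: a-1 and b are consecutive
   split points of sigma. *)
Definition is_component (n : nat) (sigma : seq nat) (a b : nat) : bool :=
  [&& 1 <= a, a <= b, b <= n, split_at sigma a.-1, split_at sigma b &
      all (fun k => ~~ split_at sigma k) (iota a (b - a))].

Definition block (sigma : seq nat) (a b : nat) : seq nat :=
  [seq nth 0 sigma k.-1 | k <- iota a (b.+1 - a)].

Definition seqmin (s : seq nat) : nat := foldr minn (head 0 s) s.

(* Main.v *)
Require Import Defs.
From mathcomp Require Import all_boot.
From mathcomp Require Import zify.

Lemma park_aux_bound n occ p s : park_aux n occ p = Some s -> uniq occ ->
  size s = size p /\ (forall j, j < size p -> nth 0 s j - nth 0 p j <= size occ + j).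
Proof.
elim: p occ s => [|a p IH] occ s /=.
  by move=> [<-] _; split => // j.
case E: [seq k <- iota a (n.+1 - a) | k \notin occ] => [|k l] //.
case E2: (park_aux n (k :: occ) p) => [s'|] //= [<-] Uocc.
have Hk : k \in [seq k <- iota a (n.+1 - a) | k \notin occ] by rewrite E inE eqxx.
rewrite mem_filter mem_iota in Hk; case/and3P: Hk => Hko Hak Hkn.
have Hsub : {subset iota a (k - a) <= occ}.
  move=> x Hx; apply/negPn/negP => Hxo.
  have Hsplit : n.+1 - a = (k - a) + (n.+1 - a - (k - a)) by lia.
  move: E; rewrite Hsplit iotaD filter_cat.
  case EA: [seq k <- iota a (k - a) | k \notin occ] => [|y t].
    have : x \in [seq k <- iota a (k - a) | k \notin occ] by rewrite mem_filter Hxo Hx.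
    by rewrite EA.
  move=> [Hy _].
  have : y \in [seq k <- iota a (k - a) | k \notin occ] by rewrite EA inE eqxx.
  rewrite mem_filter mem_iota Hy; lia.
have Hka : k - a <= size occ.
  by rewrite -(size_iota a (k - a)); apply: uniq_leq_size => //; apply: iota_uniq.
have Uk : uniq (k :: occ) by rewrite /= Hko Uocc.
have [Hs' Hb] := IH (k :: occ) s' E2 Uk.
split; first by rewrite /= Hs'.
case=> [|j] /=; first by rewrite addn0.
move=> Hj; have := Hb j Hj; rewrite /=; lia.
Qed.

Lemma index_ins (T : eqType) (s : seq T) (z y : T) m :
  y \in s -> y != z -> m <= size s ->
  index y (take m s ++ z :: drop m s) = index y s + (m <= index y s).
Proof.
move=> Hy Hyz Hm.
have Hst : size (take m s) = m by rewrite size_take_min; lia.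
rewrite index_cat.
have -> : index y s = index y (take m s ++ drop m s) by rewrite cat_take_drop.
rewrite index_cat.
case: ifP => Ht.
  have : index y (take m s) < m by rewrite -[X in _ < X]Hst index_mem.
  move=> H; rewrite (leqNgt m) H addn0 //.
rewrite /= eq_sym (negbTE Hyz) Hst; lia.
Qed.

Lemma count_ge_index (T : eqType) (s : seq T) m : uniq s -> m <= size s ->
  count (fun b => m <= index b s) s = size s - m.
Proof.
move=> Us Hm.
have Hst : size (take m s) = m by rewrite size_take_min; lia.
have E := cat_take_drop m s.
move: Us; rewrite -{1}E cat_uniq => /and3P [_ Hd _].
rewrite -[X in count _ X]E count_cat.
rewrite (@eq_in_count _ _ pred0 (take m s)); last first.
  move=> b Hb /=; rewrite -{1}E index_cat Hb.
  by apply/negbTE; rewrite -ltnNge -[X in _ < X]Hst index_mem.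
rewrite (@eq_in_count _ _ predT (drop m s)); last first.
  move=> b Hb /=; have Hb' : b \notin take m s by apply: (hasPn Hd).
  by rewrite -{1}E index_cat (negbTE Hb') Hst leq_addr.
by rewrite count_pred0 count_predT size_drop.
Qed.

Lemma inv_exists n d : size d = n -> (forall j, j < n -> nth 0 d j <= j) ->
  exists sigma, is_perm n sigma /\ InvSeq n sigma = d.
Proof.
elim: n d => [|n IH] d.
  by move/size0nil => -> _; exists [::].
case/lastP: d => [|d x] //; rewrite size_rcons => -[Hsz] Hb.
have Hb' : forall j, j < n -> nth 0 d j <= j.
  by move=> j Hj; have := Hb j (leq_trans Hj (leqnSn _)); rewrite nth_rcons Hsz Hj.
have Hx : x <= n by have := Hb n (leqnn _); rewrite nth_rcons Hsz ltnn eqxx.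
have [s0 [Hp0 Hi0]] := IH d Hsz Hb'.
have Us0 : uniq s0 by rewrite (perm_uniq Hp0) iota_uniq.
have Ss0 : size s0 = n by rewrite (perm_size Hp0) size_iota.
have Mem0 : forall y, (y \in s0) = (1 <= y < n.+1) by move=> y; rewrite (perm_mem Hp0) mem_iota add1n.
set m := n - x.
have Hm : m <= size s0 by rewrite Ss0 /m leq_subr.
exists (take m s0 ++ n.+1 :: drop m s0).
have HN : n.+1 \notin s0 by rewrite Mem0 ltnn andbF.
have HNt : n.+1 \notin take m s0 by apply: contra HN; apply: mem_take.
have Hst : size (take m s0) = m by rewrite size_take_min; lia.
have Hidx : index n.+1 (take m s0 ++ n.+1 :: drop m s0) = m.
  by rewrite index_cat (negbTE HNt) /= eqxx addn0.
split.
  rewrite /is_perm -addn1 iotaD cats1 add1n perm_sym perm_rcons perm_sym.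
  rewrite addn1 -(cat1s n.+1 (drop m s0)) (perm_catCA (take m s0) [:: n.+1] (drop m s0)) /= perm_cons cat_take_drop //.
rewrite /InvSeq -addn1 iotaD cats1 map_rcons add1n addn1; congr rcons.
  rewrite -Hi0 /InvSeq; apply/eq_in_map => a; rewrite mem_iota => /andP [Ha1 Ha2].
  rewrite /inv_at; apply: eq_in_count => b; rewrite mem_iota => /andP [Hb1 Hb2] /=.
  have Ha : a \in s0 by rewrite Mem0; lia.
  have Hb0 : b \in s0 by rewrite Mem0; lia.
  rewrite !index_ins //; try (apply/negP => /eqP H; subst; lia).
  case: (leqP m (index a s0)); case: (leqP m (index b s0)); move=> /= H1 H2; lia.
rewrite /inv_at /= Hidx.
rewrite (@eq_in_count _ _ (fun b => m <= index b s0)); last first.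
  move=> b; rewrite mem_iota => Hb0 /=.
  have Hbs : b \in s0 by rewrite Mem0; lia.
  rewrite index_ins //; last (apply/negP => /eqP H; subst; lia).
  case: (leqP m (index b s0)) => /= H; lia.
have Hp1 : perm_eq (iota 1 n) s0 by rewrite perm_sym.
rewrite (permP Hp1) count_ge_index // Ss0 /m; lia.
Qed.


Lemma split_of_inv n k sigma : is_perm n sigma -> k <= n ->
  (forall a, k < a <= n -> inv_at sigma a <= a - k.+1) -> split_at sigma k.
Proof.
move=> Hp Hk Hinv.
have Us : uniq sigma by rewrite (perm_uniq Hp) iota_uniq.
have Ss : size sigma = n by rewrite (perm_size Hp) size_iota.
have Mem : forall y, (y \in sigma) = (1 <= y < n.+1) by move=> y; rewrite (perm_mem Hp) mem_iota add1n.
set j := find (fun x => k < x) sigma.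
case: (leqP k j) => Hjk.
  have Ht : uniq (take k sigma) by apply: take_uniq.
  have Hsub : {subset take k sigma <= iota 1 k}.
    move=> y /(nthP 0) [q Hq <-].
    rewrite size_take_min in Hq.
    have Hq' : q < k by lia.
    have Hin : nth 0 sigma q \in sigma by apply: mem_nth; lia.
    rewrite Mem in Hin.
    have := @before_find _ 0 (fun x => k < x) sigma q (leq_trans Hq' Hjk).
    rewrite (nth_take _ Hq') mem_iota => /negbT; rewrite -leqNgt => H; apply/andP; split; [by case/andP: Hin | by rewrite add1n ltnS].
  have Hsz' : size (iota 1 k) <= size (take k sigma) by rewrite size_iota size_take_min; lia.
  have [Hsz Heq] := uniq_min_size Ht Hsub Hsz'.
  by apply: uniq_perm => //; apply: iota_uniq.
exfalso.
have Hjs : j < size sigma by rewrite Ss; lia.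
have Hhas : has (fun x => k < x) sigma by rewrite has_find.
set a := nth 0 sigma j.
have Hka : k < a by apply: (@nth_find _ 0 (fun x => k < x)).
have Ha : a \in sigma by apply: mem_nth.
have Han : a <= n by move: Ha; rewrite Mem; lia.
have Hia : index a sigma = j by apply: index_uniq.
have Hc : forall c, c \in sigma -> c != a -> k < c -> j < index c sigma.
  move=> c Hc Hca Hkc.
  case: (ltngtP j (index c sigma)) => // H.
    have := @before_find _ 0 (fun x => k < x) sigma _ H.
    by rewrite nth_index // Hkc.
  by move: Hca; rewrite /a H nth_index // eqxx.
have Hka' : k < a <= n by rewrite Hka Han.
have := Hinv a Hka'.
rewrite /inv_at Hia.
have Hspl : a.-1 = k + (a.-1 - k) by lia.
rewrite Hspl iotaD count_cat add1n.
rewrite (@eq_in_count _ _ predT (iota k.+1 _)); last first.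
  move=> c; rewrite mem_iota => /andP [H1 H2] /=; apply: Hc.
  - by rewrite Mem; lia.
  - by apply/negP => /eqP H; subst; lia.
  - lia.
rewrite count_predT size_iota.
have : 0 < count (fun b => j < index b sigma) (iota 1 k).
  rewrite -has_count; apply/negPn/negP => /hasPn Hn.
  have Hsub : {subset iota 1 k <= take j sigma}.
    move=> b Hb; have := Hn b Hb; rewrite -leqNgt => Hle.
    move: Hb; rewrite mem_iota => Hb.
    have Hbs : b \in sigma by rewrite Mem; lia.
    have Hlt : index b sigma < j.
      rewrite ltn_neqAle Hle andbT; apply/negP => /eqP H.
      have : b = a by rewrite /a -H nth_index.
      lia.
    by rewrite -(nth_index 0 Hbs) -(nth_take 0 Hlt); apply: mem_nth; rewrite size_take_min (minn_idPl (ltnW Hjs)).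
  have := uniq_leq_size (iota_uniq 1 k) Hsub.
  rewrite size_iota size_take_min; lia.
lia.
Qed.

Lemma seqmin_le (s : seq nat) x : x \in s -> seqmin s <= x.
Proof.
rewrite /seqmin; move: (head 0 s) => h.
elim: s => [|y s IH] //=; rewrite inE => /orP [/eqP ->|H].
  by rewrite geq_minl.
by apply: leq_trans (geq_minr _ _) (IH H).
Qed.

Lemma seqmin_ge (s : seq nat) a : s != [::] -> all (fun x => a <= x) s -> a <= seqmin s.
Proof.
rewrite /seqmin; case: s => [|h s] //= _ /andP [Hh Hs].
rewrite leq_min Hh /=.
elim: s Hs => [|y s IH] //= /andP [Hy Hs].
by rewrite leq_min Hy IH.
Qed.

Lemma comp_min n sigma i a b : is_perm n sigma -> split_at sigma i.-1 -> 1 <= i ->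
  is_component n sigma a b -> i \in block sigma a b -> i = seqmin (block sigma a b).
Proof.
move=> Hp Hsi Hi /and5P [Ha1 Hab Hbn Hsa /andP [Hsb Hnone]] Hib.
have Us : uniq sigma by rewrite (perm_uniq Hp) iota_uniq.
have Ss : size sigma = n by rewrite (perm_size Hp) size_iota.
have Hpos : forall q : nat, a <= q <= b -> a <= nth 0 sigma q.-1 <= b.
  move=> q Hq.
  have Hq1 : q.-1 < size sigma by rewrite Ss; lia.
  have Hm := mem_nth 0 Hq1; rewrite (perm_mem Hp) mem_iota in Hm.
  set w := nth 0 sigma q.-1 in Hm *.
  apply/andP; split.
    rewrite leqNgt; apply/negP => Hlt.
    have Hin : w \in take a.-1 sigma.
      rewrite (perm_mem Hsa) mem_iota.
      case/andP: Hm => Hm1 _; rewrite Hm1 add1n prednK //.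
    have : index w sigma < a.-1.
      rewrite -[X in index _ X](cat_take_drop a.-1) index_cat Hin.
      apply: leq_trans (_ : size (take a.-1 sigma) <= a.-1).
        by rewrite index_mem.
      by rewrite size_take_min geq_minl.
    rewrite /w index_uniq //; lia.
  have Hqb : q.-1 < b by lia.
  have : w \in take b sigma.
    rewrite /w -(nth_take 0 Hqb); apply: mem_nth; by rewrite size_take_min leq_min Hqb Hq1.
  rewrite (perm_mem Hsb) mem_iota; case/andP => _; rewrite add1n ltnS //.
have Hrange : forall v, v \in block sigma a b -> a <= v <= b.
  move=> v /mapP [q]; rewrite mem_iota => Hq ->; apply: Hpos; lia.
have /andP [Hai Hib'] := Hrange i Hib.
have Hia : i = a.
  apply/eqP; rewrite eqn_leq Hai andbT leqNgt; apply/negP => Hlt.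
  have : i.-1 \in iota a (b - a) by rewrite mem_iota; lia.
  by move/(allP Hnone); rewrite Hsi.
subst i; apply/eqP; rewrite eqn_leq seqmin_le // andbT.
apply: seqmin_ge; first by move: Hib; case: (block _ _ _).
by apply/allP => v /Hrange /andP [].
Qed.


Theorem lemma3p8 (n i : nat) (p s : seq nat) :
  is_pref n p ->
  spots n p = Some s ->
  1 <= i <= n ->
  outcome_of n s = Inc n i ->
  (exists sigma, is_perm n sigma /\ InvSeq n sigma = disp_of s p) /\
  (forall sigma, is_perm n sigma -> InvSeq n sigma = disp_of s p ->
     forall a b, is_component n sigma a b -> i \in block sigma a b ->
       i = seqmin (block sigma a b)).
Proof.
move=> /andP [/eqP Hp Hall] Hsp /andP [Hi1 Hin] Hout.
have [Hs Hb] := @park_aux_bound n [::] p s Hsp (isT : uniq [::]).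
rewrite Hp in Hs Hb.
have Hd : size (disp_of s p) = n by rewrite /disp_of size_map size_zip Hs Hp minnn.
have Hnth : forall j, j < n -> nth 0 (disp_of s p) j = nth 0 s j - nth 0 p j.
  move=> j Hj; rewrite /disp_of (nth_map (0, 0)) ?size_zip ?Hs ?Hp ?minnn //.
  by rewrite nth_zip // Hs Hp.
have Hp1 : forall j, j < n -> 1 <= nth 0 p j.
  move=> j Hj; have Hj2 : j < size p by rewrite Hp.
  have := allP Hall (nth 0 p j) (mem_nth 0 Hj2).
  by case/andP.
split.
  apply: inv_exists => // j Hj; rewrite Hnth //; exact: Hb j Hj.
move=> sigma Hps Hinv a b Hc Hib.
apply: (@comp_min n sigma i a b Hps _ Hi1 Hc Hib).
apply: (@split_of_inv n i.-1 sigma Hps); first lia.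
move=> a' /andP [Ha1 Ha2].
have Ha' : i <= a' by lia.
have HsA : nth 0 s a'.-1 = a' - i + 1.
  have := congr1 (nth 0 ^~ (a' - i)) Hout => /=.
  rewrite /outcome_of (nth_map 0) ?size_iota; last lia.
  rewrite nth_iota; last lia.
  rewrite /Inc nth_cat size_iota.
  have -> : (a' - i < n.+1 - i) = true by apply/idP; lia.
  rewrite nth_iota; last lia.
  move=> Hidx.
  have Hix : index (1 + (a' - i)) s = a'.-1 by lia.
  have Hmem : (1 + (a' - i)) \in s by rewrite -index_mem Hix Hs; lia.
  rewrite -Hix nth_index //; lia.
have := Hp1 a'.-1 (ltac:(lia)).
have -> : inv_at sigma a' = nth 0 (InvSeq n sigma) a'.-1.
  rewrite /InvSeq (nth_map 0) ?size_iota; last lia.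
  rewrite nth_iota; last lia.
  congr inv_at; lia.
rewrite Hinv Hnth; last lia.
rewrite HsA; lia.
Qed.
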